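(* For every integer $n\ge 5$, the independence polynomial $I(T_{4,n};t)$ is unimodal and its mode belongs to $\{\lambda_{n+2},\lambda_{n+2}+1\}$, where $\lambda_{k}$ denotes the mode of the independence polynomial $I(P_k;t)$ of the path $P_k$ on $k$ vertices.
   Context: For a simple graph $G$, the independence polynomial is $I(G;t)=\sum_{k\ge 0}s_k(G)t^k$, where $s_k(G)$ is the number of independent sets (sets of pairwise non-adjacent vertices) of size $k$ in $G$. $P_k$ is the path on $k$ vertices; its independence polynomial is known to be unimodal. For integers $m\ge 3$, $n\ge 1$, the tadpole graph $T_{m,n}$ is the simple graph with vertex set $\{x_1,\dots,x_m,y_1,\dots,y_n\}$ and edges $\{x_i,x_{i+1}\}$ for $1\le i\le m-1$, $\{x_m,x_1\}$, $\{y_j,y_{j+1}\}$ for $1\le j\le n-1$, and $\{x_m,y_1\}$. A polynomial $\sum a_kt^k$ with nonnegative coefficients is unimodal if $a_0\le\cdots\le a_m\ge a_{m+1}\ge\cdots$ for some $m$; with $a_{-1}=0$, its mode is the unique $i$ with $a_{i-1}<a_i\ge a_{i+1}\ge a_{i+2}\ge\cdots$. *)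

(* Defs.v *)
From mathcomp Require Import all_boot.
Set Implicit Arguments. Unset Strict Implicit. Unset Printing Implicit Defensive.

(* A simple graph on a finType is given by a symmetric irreflexive rel. *)
Definition independent {T : finType} (e : rel T) (S : {set T}) : bool :=
  [forall x in S, forall y in S, ~~ e x y].

(* s_k(G): number of independent sets of size k; the coefficient sequence of I(G;t). *)
Definition indep_coef {T : finType} (e : rel T) (k : nat) : nat :=
  #|[set S : {set T} | independent e S && (#|S| == k)]|.

Definition path_rel (k : nat) : rel 'I_k :=
  fun u v => ((val u).+1 == val v) || ((val v).+1 == val u).

(* Tadpole T_{m,n} on 'I_(m+n): x_i is vertex i-1 (1<=i<=m), y_j is vertex m+j-1 (1<=j<=n). *)
Definition tad_edge (m n a b : nat) : bool :=
  [|| [&& a.+1 == b & b < m]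
    , [&& a == m.-1 & b == 0]               (* {x_m, x_1} *)
    , [&& m <= a, a.+1 == b & b < m + n]
    | [&& a == m.-1 & b == m] ].            (* {x_m, y_1} *)

Definition tadpole_rel (m n : nat) : rel 'I_(m + n) :=
  fun u v => tad_edge m n (val u) (val v) || tad_edge m n (val v) (val u).

Definition unimodal (a : nat -> nat) : Prop :=
  exists m, (forall i, i < m -> a i <= a i.+1) /\ (forall i, m <= i -> a i.+1 <= a i).

Definition is_mode (a : nat -> nat) (i : nat) : Prop :=
  (if i is j.+1 then a j < a i else 0 < a 0) /\ (forall j, i <= j -> a j.+1 <= a j).
Arguments tadpole_rel : clear implicits.
Arguments path_rel : clear implicits.

(* Main.v *)
Require Import Defs.
From mathcomp Require Import all_boot zify.
Set Implicit Arguments. Unset Strict Implicit. Unset Printing Implicit Defensive.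

Fixpoint all_bits (k : nat) : seq (seq bool) :=
  if k is k'.+1 then [seq false :: s | s <- all_bits k'] ++ [seq true :: s | s <- all_bits k']
  else [:: [::]].

Fixpoint noadj (s : seq bool) : bool :=
  if s is a :: t then ~~ (a && nth false t 0) && noadj t else true.

Definition to_set m (s : seq bool) : {set 'I_m} := [set i : 'I_m | nth false s i].

Lemma all_bits_size k s : s \in all_bits k -> size s = k.
Proof.
elim: k s => [|k IH] s /=; first by rewrite inE => /eqP ->.
by rewrite mem_cat => /orP [] /mapP [t /IH <- ->].
Qed.

Lemma all_bits_mem s : s \in all_bits (size s).
Proof.
elim: s => [|a s IH]; first by [] || rewrite mem_seq1.
rewrite mem_cat; case: a; apply/orP; [right|left]; exact: map_f.
Qed.

Lemma all_bits_uniq k : uniq (all_bits k).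
Proof.
elim: k => [|k IH] //=.
rewrite cat_uniq !map_inj_uniq //; last by move=> x y [].
rewrite IH /= andbT; apply/hasPn => x /mapP [t _ ->]; apply/mapP => [[u _]] //.
by move=> x y [].
Qed.

Lemma noadjP s : reflect (forall i, ~~ (nth false s i && nth false s i.+1)) (noadj s).
Proof.
elim: s => [|a s IH] /=; first by constructor => i; rewrite nth_nil.
apply: (iffP andP) => [[h1 /IH h2] [|i]|h] //=.
split; first exact: (h 0).
by apply/IH => i; exact: (h i.+1).
Qed.

Lemma nth_true_lt (s : seq bool) i : nth false s i -> i < size s.
Proof. by case: (ltnP i (size s)) => // h; rewrite nth_default. Qed.

Lemma perm_bits m : perm_eq (map (@to_set m) (all_bits m)) (enum {set 'I_m}).
Proof.
apply: uniq_perm; last 1 first.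
- move=> S; rewrite mem_enum; apply/mapP.
  exists (mkseq (fun i => i \in [seq val x | x <- enum S]) m).
    by have := all_bits_mem (mkseq (fun i => i \in [seq val x | x <- enum S]) m); rewrite size_mkseq.
  apply/setP => x; rewrite inE nth_mkseq // mem_map; last exact: val_inj.
  by rewrite mem_enum.
- rewrite map_inj_in_uniq ?all_bits_uniq // => s1 s2 h1 h2 e.
  apply: (@eq_from_nth _ false); first by rewrite (all_bits_size h1) (all_bits_size h2).
  move=> i; rewrite (all_bits_size h1) => lt.
  by move/setP: e => /(_ (Ordinal lt)); rewrite !inE.
- exact: enum_uniq.
Qed.

Lemma indep_coef_bits m (e : rel 'I_m) j :
  indep_coef e j = count (fun s => independent e (to_set m s) && (#|to_set m s| == j)) (all_bits m).
Proof.
rewrite /indep_coef cardsE cardE /enum_mem -enumT size_filter.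
by rewrite -(permP (perm_bits m)) count_map.
Qed.

Lemma card_to_set m s : size s = m -> #|to_set m s| = count id s.
Proof.
move=> hs; rewrite cardsE cardE /enum_mem -enumT size_filter.
rewrite -[in RHS](mkseq_nth false s) hs /mkseq -val_enum_ord -map_comp count_map.
by apply: eq_count.
Qed.

Lemma indep_gen m (e : rel 'I_m) (E : nat -> nat -> bool) s :
  size s = m -> (forall x y : 'I_m, e x y = E x y) ->
  independent e (to_set m s) =
  [forall x : 'I_m, forall y : 'I_m, ~~ [&& nth false s x, nth false s y & E x y]].
Proof.
move=> hs he; apply/forallP/forallP => h x.
- apply/forallP => y; apply/negP => /and3P [hx hy hE].
  have /implyP := h x; rewrite inE => /(_ hx) /forall_inP /(_ y).
  by rewrite inE hy he hE => /(_ isT).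
- apply/implyP; rewrite inE => hx; apply/forall_inP => y; rewrite inE => hy.
  by have /forallP/(_ y) := h x; rewrite hx hy he.
Qed.

Lemma indep_path m s : size s = m ->
  independent (path_rel m) (to_set m s) = noadj s.
Proof.
move=> hs; rewrite (indep_gen (E := fun a b => (a.+1 == b) || (b.+1 == a))) //.
apply/forallP/noadjP => h.
- move=> i; apply/negP => /andP [h1 h2].
  have lt := nth_true_lt h2; rewrite hs in lt.
  have /forallP/(_ (Ordinal lt)) := h (Ordinal (ltnW lt)).
  by rewrite /= h1 h2 eqxx.
- move=> x; apply/forallP => y; apply/negP => /and3P [hx hy /orP [] /eqP e].
  + by have := h x; rewrite hx e hy.
  + by have := h y; rewrite hy e hx.
Qed.

Lemma tad_edgeE n a b : a < 4 + n -> b < 4 + n ->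
  tad_edge 4 n a b || tad_edge 4 n b a =
  [|| a.+1 == b, b.+1 == a, (a == 0) && (b == 3) | (a == 3) && (b == 0)].
Proof. rewrite /tad_edge => ha hb. lia. Qed.

Lemma indep_tad n s : size s = 4 + n ->
  independent (tadpole_rel 4 n) (to_set (4 + n) s) =
  noadj s && ~~ (nth false s 0 && nth false s 3).
Proof.
move=> hs; rewrite (indep_gen (E := fun a b =>
  [|| a.+1 == b, b.+1 == a, (a == 0) && (b == 3) | (a == 3) && (b == 0)])) //; last first.
  by move=> x y; rewrite /tadpole_rel (tad_edgeE (ltn_ord x) (ltn_ord y)).
apply/forallP/andP => h.
- split.
  + apply/noadjP => i; apply/negP => /andP [h1 h2].
    have lt := nth_true_lt h2; rewrite hs in lt.
    have /forallP/(_ (Ordinal lt)) := h (Ordinal (ltnW lt)).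
    by rewrite /= h1 h2 eqxx.
  + apply/negP => /andP [h1 h2].
    have lt := nth_true_lt h2; rewrite hs in lt.
    have lt0 : 0 < 4 + n by [].
    have /forallP/(_ (Ordinal lt)) := h (Ordinal lt0).
    by rewrite /= h1 h2.
- case: h => /noadjP h h03.
  move=> x; apply/forallP => y; apply/negP => /and3P [hx hy /or4P [/eqP e|/eqP e|/andP [/eqP e1 /eqP e2]|/andP [/eqP e1 /eqP e2]]].
  + by have := h x; rewrite hx e hy.
  + by have := h y; rewrite hy e hx.
  + by rewrite e1 in hx; rewrite e2 in hy; rewrite hx hy in h03.
  + by rewrite e1 in hx; rewrite e2 in hy; rewrite hx hy in h03.
Qed.

Lemma count_bits_S (P : pred (seq bool)) k :
  count P (all_bits k.+1) =
  count (fun t => P (false :: t)) (all_bits k) + count (fun t => P (true :: t)) (all_bits k).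
Proof. by rewrite /= count_cat !count_map. Qed.

Fixpoint cnt_is (s : seq bool) (j : nat) : bool :=
  if s is b :: t then (if b then (if j is j'.+1 then cnt_is t j' else false) else cnt_is t j)
  else j == 0.

Lemma cnt_isE s j : cnt_is s j = (count id s == j).
Proof.
elim: s j => [|b s IH] j /=; first by rewrite eq_sym.
by case: b; case: j => [|j] //=; rewrite IH.
Qed.

Definition Np k j := count (fun s => noadj s && cnt_is s j) (all_bits k).
Definition N0 k j := count (fun t => ~~ nth false t 0 && noadj t && cnt_is t j) (all_bits k).

Lemma count_false (T : Type) (s : seq T) : count (fun _ : T => false) s = 0.
Proof. by elim: s. Qed.

Lemma count_falseB (s : seq (seq bool)) : count (fun _ : seq bool => false) s = 0.
Proof. by elim: s. Qed.

Lemma count_andF (T : Type) (P : pred T) (s : seq T) : count (fun t => P t && false) s = 0.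
Proof. by elim: s => //= t s ->; rewrite andbF. Qed.

Lemma N0S k j : N0 k.+1 j = Np k j.
Proof. by rewrite /N0 count_bits_S /= (count_false (all_bits k)) addn0. Qed.

Lemma NpSS k j : Np k.+2 j = Np k.+1 j + (if j is j'.+1 then Np k j' else 0).
Proof.
rewrite {1}/Np count_bits_S /=; congr (_ + _).
case: j => [|j]; first by rewrite count_andF.
by rewrite -N0S.
Qed.

Definition Tad n j :=
  count (fun s => [&& ~~ (nth false s 0 && nth false s 3), noadj s & cnt_is s j]) (all_bits (4 + n)).

Lemma Tad0 n : Tad n 0 = Np n 0.
Proof.
rewrite /Tad (_ : 4 + n = n.+4) // !count_bits_S /= !count_andF.
by rewrite !count_falseB !addn0.
Qed.

Lemma Tad1 n : Tad n 1 = Np n 1 + 3 * Np n 0 + N0 n 0.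
Proof.
rewrite /Tad (_ : 4 + n = n.+4) // !count_bits_S /= !count_andF -/(Np n 1) -/(Np n 0) -/(N0 n 0).
rewrite !count_falseB; lia.
Qed.

Lemma TadSS n j : Tad n j.+2 = Np n j.+2 + 3 * Np n j.+1 + Np n j + N0 n j.+1 + N0 n j.
Proof.
rewrite /Tad (_ : 4 + n = n.+4) // !count_bits_S /= !count_falseB -!/(Np n _) -!/(N0 n _).
lia.
Qed.

Lemma Np0 j : Np 0 j = (j == 0).
Proof. by case: j. Qed.

Lemma Np1 j : Np 1 j = (j == 0) + (j == 1).
Proof. by case: j => [|[|j]]. Qed.

Lemma Np_bin k j : Np k j = 'C(k.+1 - j, j).
Proof.
elim/ltn_ind: k j => k IH j.
case: k IH => [|[|k]] IH.
- by rewrite Np0; case: j => [|[|j]] //; rewrite bin0n.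
- by rewrite Np1; case: j => [|[|[|j]]] //; rewrite bin0n.
rewrite NpSS (IH k.+1 (ltnSn _)).
case: j => [|j]; first by rewrite !bin0 addn0.
rewrite (IH k (leqnSn _)).
rewrite !subSS.
case: (leqP j k.+1) => hj.
- by rewrite (_ : k.+2 - j = (k.+1 - j).+1) ?binS //; lia.
- by rewrite !bin_small //; lia.
Qed.

Definition B k j := 'C(k.+1 - j, j).

Lemma path_coef k j : indep_coef (path_rel k) j = B k j.
Proof.
rewrite indep_coef_bits /B -Np_bin /Np; apply: eq_in_count => s hs /=.
by rewrite indep_path ?card_to_set ?(all_bits_size hs) // cnt_isE.
Qed.

Lemma Np_0 k : Np k 0 = 1.
Proof. by rewrite Np_bin bin0. Qed.

Lemma tad_coef m j : indep_coef (tadpole_rel 4 m.+1) j =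
  if j is j'.+1 then B m.+3 j + B m.+3 j' + B m.+1 j' else 1.
Proof.
have -> : indep_coef (tadpole_rel 4 m.+1) j = Tad m.+1 j.
  rewrite indep_coef_bits /Tad; apply: eq_in_count => s hs /=.
  rewrite indep_tad ?card_to_set ?(all_bits_size hs) // cnt_isE.
  by case: (noadj s); case: (~~ _).

have BN k i : B k i = Np k i by rewrite Np_bin.
case: j => [|[|j]].
- by rewrite Tad0 Np_0.
- rewrite !BN Tad1 N0S !NpSS !Np_0; lia.
- rewrite !BN TadSS !N0S !NpSS; lia.
Qed.
Definition cond k j := (j.*2 < k) && (j.+1 * (k.+1 - j) < (k.+1 - j.*2) * (k - j.*2)).

Lemma F1 k j : cond k j.+1 -> cond k j.
Proof.
rewrite /cond => /andP [h1 h2].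
have [r er] : exists r, k = j.*2 + 3 + r by exists (k - j.*2 - 3); lia.
subst k.
have e1 : (j.*2 + 3 + r).+1 - j.+1 = j + 3 + r by lia.
have e2 : (j.*2 + 3 + r).+1 - j.+1.*2 = r + 2 by lia.
have e3 : (j.*2 + 3 + r) - j.+1.*2 = r + 1 by lia.
have e4 : (j.*2 + 3 + r).+1 - j = j + 4 + r by lia.
have e5 : (j.*2 + 3 + r).+1 - j.*2 = r + 4 by lia.
have e6 : (j.*2 + 3 + r) - j.*2 = r + 3 by lia.
rewrite e1 e2 e3 in h2; rewrite e4 e5 e6.
apply/andP; split; first lia.
nia.
Qed.

Lemma F2 n j : cond n.+2 j.+1 -> cond n j.
Proof.
rewrite /cond => /andP [h1 h2].
have [r er] : exists r, n = j.*2 + 1 + r by exists (n - j.*2 - 1); lia.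
subst n.
have e1 : (j.*2 + 1 + r).+3 - j.+1 = j + 3 + r by lia.
have e2 : (j.*2 + 1 + r).+3 - j.+1.*2 = r + 2 by lia.
have e3 : (j.*2 + 1 + r).+2 - j.+1.*2 = r + 1 by lia.
have e4 : (j.*2 + 1 + r).+1 - j = j + 2 + r by lia.
have e5 : (j.*2 + 1 + r).+1 - j.*2 = r + 2 by lia.
have e6 : (j.*2 + 1 + r) - j.*2 = r + 1 by lia.
rewrite e1 e2 e3 in h2; rewrite e4 e5 e6.
apply/andP; split; first lia.
nia.
Qed.

Lemma F3 n j : cond n j -> cond n.+2 j.
Proof.
rewrite /cond => /andP [h1 h2].
have [r er] : exists r, n = j.*2 + 1 + r by exists (n - j.*2 - 1); lia.
subst n.
have e1 : (j.*2 + 1 + r).+3 - j = j + 4 + r by lia.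
have e2 : (j.*2 + 1 + r).+3 - j.*2 = r + 4 by lia.
have e3 : (j.*2 + 1 + r).+2 - j.*2 = r + 3 by lia.
have e4 : (j.*2 + 1 + r).+1 - j = j + 2 + r by lia.
have e5 : (j.*2 + 1 + r).+1 - j.*2 = r + 2 by lia.
have e6 : (j.*2 + 1 + r) - j.*2 = r + 1 by lia.
rewrite e4 e5 e6 in h2; rewrite e1 e2 e3.
have hjr : j < r.
  rewrite ltnNge; apply/negP => hrj.
  have : (r + 2) * (r + 1) <= j.+1 * (j + 2 + r) by rewrite mulnC; apply: leq_mul; lia.
  lia.
apply/andP; split; first lia.
nia.
Qed.


Lemma ratio k j : B k j.+1 * (j.+1 * (k.+1 - j)) = B k j * ((k.+1 - j.*2) * (k - j.*2)).
Proof.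
rewrite /B subSS.
have h1 := mul_bin_left (k - j) j.
have h2 := mul_bin_down (k.+1 - j) j.
have e : (k.+1 - j).-1 = k - j by lia.
rewrite e in h2.
have e3 : k - j - j = k - j.*2 by lia.
have e4 : k.+1 - j - j = k.+1 - j.*2 by lia.
rewrite e3 in h1; rewrite e4 in h2.
rewrite mulnA (mulnC 'C(k - j, j.+1)) h1 -mulnA (mulnC 'C(k - j, j)) h2.
by rewrite mulnA mulnC (mulnC (k - j.*2)).
Qed.

Lemma incP k j : (B k j < B k j.+1) = cond k j.
Proof.
rewrite /cond; case: (ltnP j.*2 k) => h /=.
- have hB : 0 < B k j by rewrite /B bin_gt0; lia.
  have hA : 0 < j.+1 * (k.+1 - j) by rewrite muln_gt0; apply/andP; split => //; lia.
  rewrite -(ltn_pmul2r hA) ratio ltn_pmul2l //.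
- rewrite /B [X in _ < X]bin_small ?ltn0 //; lia.
Qed.

Lemma condW k i j : i <= j -> cond k j -> cond k i.
Proof.
move=> hij; rewrite -(subnK hij); elim: (j - i) => [|d IH] //= h.
by apply: IH; apply: F1; rewrite addSn in h.
Qed.

Lemma B0 k : B k 0 = 1.
Proof. by rewrite /B bin0. Qed.

Theorem proposition3p4 (n : nat) : 5 <= n ->
  unimodal (indep_coef (tadpole_rel 4 n)) /\
  exists i lam : nat,
    [/\ is_mode (indep_coef (tadpole_rel 4 n)) i,
        is_mode (indep_coef (path_rel n.+2)) lam &
        (i = lam \/ i = lam.+1)].
Proof.
case: n => [//|m] _.
set a := indep_coef (tadpole_rel 4 m.+1).
have aE j : a j = if j is j'.+1 then B m.+3 j + B m.+3 j' + B m.+1 j' else 1 by rewrite /a tad_coef.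
have pE j : indep_coef (path_rel m.+3) j = B m.+3 j by rewrite path_coef.
have exl : exists j, ~~ cond m.+3 j by exists m.+3; rewrite /cond; apply/negP => /andP [h _]; lia.
case: (ex_minnP exl) => lam hlam hmin.
have Pinc j : j < lam -> B m.+3 j < B m.+3 j.+1.
  move=> hj; rewrite incP; apply/negPn/negP => /hmin; lia.
have Pdec j : lam <= j -> B m.+3 j.+1 <= B m.+3 j.
  move=> hj; rewrite leqNgt incP; apply/negP => /(condW hj) h; by rewrite h in hlam.
have Qinc j : j.+1 < lam -> B m.+1 j < B m.+1 j.+1.
  by move=> hj; rewrite incP; apply: F2; rewrite -incP; apply: Pinc.
have Qdec j : lam <= j -> B m.+1 j.+1 <= B m.+1 j.
  move=> hj; rewrite leqNgt incP; apply/negP => /F3 /(condW hj) h; by rewrite h in hlam.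
have Ainc j : j < lam -> a j < a j.+1.
  rewrite !aE; case: j => [|j] hj.
  - by rewrite !B0; lia.
  - have := Pinc j.+1 hj; have := Pinc j (ltnW hj); have := Qinc j hj; lia.
have Adec j : lam < j -> a j.+1 <= a j.
  rewrite !aE; case: j => [//|j] hj.
  have := Pdec j.+1 (ltnW hj); have := Pdec j hj; have := Qdec j hj; lia.
have pmode : is_mode (indep_coef (path_rel m.+3)) lam.
  split; last by move=> j hj; rewrite !pE; apply: Pdec.
  case: lam {hlam hmin Pinc Pdec Qinc Qdec Ainc Adec} (Pinc) => [|l] hP; first by rewrite pE B0.
  by rewrite !pE; apply: hP.
have mode_lo : ((if lam is l.+1 then a l < a lam else 0 < a 0) : Prop).
  case: lam {hlam hmin Pinc Pdec Qinc Qdec Adec pmode} Ainc => [|l] hA; first by rewrite aE.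
  by apply: hA.
case: (leqP (a lam.+1) (a lam)) => hc.
- have dec j : lam <= j -> a j.+1 <= a j.
    by rewrite leq_eqVlt => /orP [/eqP <-|/Adec].
  split; first by exists lam; split => i hi; [apply: ltnW; apply: Ainc | apply: dec].
  exists lam, lam; split => //; last by left.
- have dec j : lam.+1 <= j -> a j.+1 <= a j by move/Adec.
  split.
    exists lam.+1; split => i hi; last exact: dec.
    by move: hi; rewrite ltnS leq_eqVlt => /orP [/eqP ->|/Ainc]; [apply: ltnW | apply: ltnW].
  by exists lam.+1, lam; split => //; right.
Qed.
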